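(* Let $\mathbf A,\mathbf B$ be complete perfect DInFL-algebras and $h:\mathbf A\to\mathbf B$ a complete homomorphism. Define $h_+:J^\infty(\mathbf B)\to J^\infty(\mathbf A)$ by $h_+(b)=\bigwedge\{a\in A\mid b\leqslant h(a)\}$. Then: (i) $h_+$ is a DInFL-frame morphism from $\mathbf B_+$ to $\mathbf A_+$; (ii) if $h$ is injective then $h_+$ is surjective; (iii) if $h$ is surjective then $h_+$ is an order-embedding (with respect to the orders $\preccurlyeq$ of $\mathbf B_+$ and $\mathbf A_+$).
   Context: An InFL-algebra is $(A,\wedge,\vee,\cdot,1,\sim,-)$ with a lattice, a monoid, and $a\cdot b\leqslant c\iff a\leqslant -(b\cdot{\sim}c)\iff b\leqslant{\sim}(-c\cdot a)$; DInFL means distributive lattice reduct. Complete perfect: complete, every element the join of completely join-irreducibles ($J^\infty$) below it and meet of completely meet-irreducibles above it. A complete homomorphism preserves all operations and arbitrary joins and meets. $\kappa(j)=\bigvee\{a\mid j\not\leqslant a\}$. For a complete perfect DInFL-algebra $\mathbf A$, $\mathbf A_+=(J^\infty(\mathbf A),I_1,\preccurlyeq,\circ,{}^\sim,{}^-)$ with $I_1=\{i\in J^\infty(\mathbf A)\mid i\leqslant 1\}$, $a\preccurlyeq b$ iff $b\leqslant a$, $c\in a\circ b$ iff $c\leqslant a\cdot b$, $a^\sim={\sim}\kappa(a)$, $a^-=-\kappa(a)$. A DInFL-frame morphism between structures $(W_1,I_1,\preccurlyeq_1,\circ_1,{}^{\sim_1},{}^{-_1})$ and $(W_2,I_2,\preccurlyeq_2,\circ_2,{}^{\sim_2},{}^{-_2})$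 (with $\circ_i:W_i\times W_i\to\mathcal P(W_i)$) is a function $f:W_1\to W_2$ such that for all $x,y,z\in W_1$, $u,v\in W_2$: (M1) $x\preccurlyeq_1 y$ implies $f(x)\preccurlyeq_2 f(y)$; (M2) $z\in x\circ_1 y$ implies $f(z)\in f(x)\circ_2 f(y)$; (M3) if $f(z)\in u\circ_2 v$ then there exist $x,y\in W_1$ with $u\preccurlyeq_2 f(x)$, $v\preccurlyeq_2 f(y)$, $z\in x\circ_1 y$; (M4) $f(x^{\sim_1})=f(x)^{\sim_2}$; (M5) $f(x^{-_1})=f(x)^{-_2}$; (M6) $I_1=f^{-1}[I_2]$. *)

(* Defs.v *)
Set Implicit Arguments.

(* The lattice order is a <= b :<-> a /\ b = a. *)
Record DInFL := {
  car :> Type;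
  meet : car -> car -> car;
  join : car -> car -> car;
  mul  : car -> car -> car;
  one  : car;
  tilde : car -> car;
  minus : car -> car;
  meet_comm : forall a b, meet a b = meet b a;
  meet_assoc : forall a b c, meet a (meet b c) = meet (meet a b) c;
  join_comm : forall a b, join a b = join b a;
  join_assoc : forall a b c, join a (join b c) = join (join a b) c;
  absorb_mj : forall a b, meet a (join a b) = a;
  absorb_jm : forall a b, join a (meet a b) = a;
  distr : forall a b c, meet a (join b c) = join (meet a b) (meet a c);
  mul_assoc : forall a b c, mul a (mul b c) = mul (mul a b) c;
  mul_1l : forall a, mul one a = a;
  mul_1r : forall a, mul a one = a;
  resid1 : forall a b c, meet (mul a b) c = mul a b <->
                         meet a (minus (mul b (tilde c))) = a;
  resid2 : forall a b c, meet (mul a b) c = mul a b <->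
                         meet b (tilde (mul (minus c) a)) = b
}.

Arguments meet {_}. Arguments join {_}. Arguments mul {_}.
Arguments tilde {_}. Arguments minus {_}.

Definition le {A : DInFL} (a b : A) : Prop := meet a b = a.

Definition is_lub {A : DInFL} (S : A -> Prop) (s : A) : Prop :=
  (forall x, S x -> le x s) /\ (forall u, (forall x, S x -> le x u) -> le s u).
Definition is_glb {A : DInFL} (S : A -> Prop) (s : A) : Prop :=
  (forall x, S x -> le s x) /\ (forall u, (forall x, S x -> le u x) -> le u s).

Record cDInFL := {
  alg :> DInFL;
  csup : (alg -> Prop) -> alg;
  cinf : (alg -> Prop) -> alg;
  csup_lub : forall S, is_lub S (csup S);
  cinf_glb : forall S, is_glb S (cinf S)
}.

Arguments csup : clear implicits. Arguments cinf : clear implicits.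

Definition cji {A : cDInFL} (j : A) : Prop :=
  forall S : A -> Prop, j = csup A S -> S j.
Definition cmi {A : cDInFL} (m : A) : Prop :=
  forall S : A -> Prop, m = cinf A S -> S m.

Definition perfect (A : cDInFL) : Prop :=
  (forall a : A, a = csup A (fun j => cji j /\ le j a)) /\
  (forall a : A, a = cinf A (fun m => cmi m /\ le a m)).

Definition image (A B : Type) (h : A -> B) (S : A -> Prop) : B -> Prop :=
  fun y => exists x, S x /\ y = h x.

Definition complete_hom {A B : cDInFL} (h : A -> B) : Prop :=
  (forall a b, h (meet a b) = meet (h a) (h b)) /\
  (forall a b, h (join a b) = join (h a) (h b)) /\
  (forall a b, h (mul a b) = mul (h a) (h b)) /\
  h (one A) = one B /\
  (forall a, h (tilde a) = tilde (h a)) /\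
  (forall a, h (minus a) = minus (h a)) /\
  (forall S, h (csup A S) = csup B (image h S)) /\
  (forall S, h (cinf A S) = cinf B (image h S)).

Definition kappa {A : cDInFL} (j : A) : A :=
  csup A (fun a => ~ le j a).

(* A frame is presented on an ambient type [W] together with a predicate [Wd]
   carving out the actual underlying set. [circ x y z] means z ∈ x ∘ y. *)
Record frame := {
  W : Type;
  Wd : W -> Prop;
  fI : W -> Prop;
  prec : W -> W -> Prop;
  circ : W -> W -> W -> Prop;
  ftil : W -> W;
  fmin : W -> W
}.

Arguments Wd {_}. Arguments fI {_}. Arguments prec {_}. Arguments circ {_}.
Arguments ftil {_}. Arguments fmin {_}.

(* The dual frame A_+ of a complete perfect DInFL-algebra, with underlying
   set J^infty(A). *)
Definition plus (A : cDInFL) : frame := {|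
  W := A;
  Wd := fun j => cji j;
  fI := fun i => cji i /\ le i (one A);
  prec := fun a b => le b a;
  circ := fun a b c => le c (mul a b);
  ftil := fun a => tilde (kappa a);
  fmin := fun a => minus (kappa a)
|}.

(* DInFL-frame morphism (M1)-(M6), together with the requirement that f maps
   the underlying set of F1 into that of F2. *)
Definition frame_morphism {F1 F2 : frame} (f : W F1 -> W F2) : Prop :=
  (forall x, Wd x -> Wd (f x)) /\
  (forall x y, Wd x -> Wd y -> prec x y -> prec (f x) (f y)) /\
  (forall x y z, Wd x -> Wd y -> Wd z -> circ x y z -> circ (f x) (f y) (f z)) /\
  (forall z u v, Wd z -> Wd u -> Wd v -> circ u v (f z) ->
     exists x y, Wd x /\ Wd y /\ prec u (f x) /\ prec v (f y) /\ circ x y z) /\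
  (forall x, Wd x -> f (ftil x) = ftil (f x)) /\
  (forall x, Wd x -> f (fmin x) = fmin (f x)) /\
  (forall x, Wd x -> (fI x <-> fI (f x))).

Definition hplus {A B : cDInFL} (h : A -> B) (b : B) : A :=
  cinf A (fun a => le b (h a)).

(* Main.v *)
Require Import Defs.
From Stdlib Require Import Classical.

Lemma le_refl (A : DInFL) (a : A) : le a a.
Proof. unfold le. rewrite <- (absorb_jm A a a) at 2. apply absorb_mj. Qed.

Lemma le_antisym (A : DInFL) (a b : A) : le a b -> le b a -> a = b.
Proof. unfold le. intros H1 H2. rewrite <- H1. rewrite meet_comm. exact H2. Qed.

Lemma le_trans (A : DInFL) (a b c : A) : le a b -> le b c -> le a c.
Proof. unfold le. intros H1 H2. rewrite <- H1, <- meet_assoc, H2. reflexivity. Qed.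

Lemma meet_lb1 (A : DInFL) (a b : A) : le (meet a b) a.
Proof. unfold le. rewrite (meet_comm A _ a), meet_assoc. rewrite (le_refl A a). reflexivity. Qed.

Lemma meet_lb2 (A : DInFL) (a b : A) : le (meet a b) b.
Proof. rewrite meet_comm. apply meet_lb1. Qed.

Lemma meet_glb (A : DInFL) (a b c : A) : le c a -> le c b -> le c (meet a b).
Proof. unfold le. intros H1 H2. rewrite meet_assoc, H1. exact H2. Qed.

Lemma join_ub1 (A : DInFL) (a b : A) : le a (join a b).
Proof. apply absorb_mj. Qed.

Lemma join_ub2 (A : DInFL) (a b : A) : le b (join a b).
Proof. rewrite join_comm. apply join_ub1. Qed.

Lemma le_join (A : DInFL) (a b : A) : le a b <-> join a b = b.
Proof. unfold le. split; intro H.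
- rewrite <- H. rewrite join_comm, meet_comm. apply absorb_jm.
- rewrite <- H. apply absorb_mj. Qed.

Lemma join_lub (A : DInFL) (a b c : A) : le a c -> le b c -> le (join a b) c.
Proof. intros H1 H2. apply le_join. apply le_join in H1. apply le_join in H2.
  rewrite <- join_assoc, H2. exact H1. Qed.

Lemma meet_mono (A : DInFL) (a b c : A) : le a b -> le (meet a c) (meet b c).
Proof. intro H. apply meet_glb. eapply le_trans. apply meet_lb1. exact H. apply meet_lb2. Qed.

Lemma mmono_l (A : DInFL) (a a' b : A) : le a a' -> le (mul a b) (mul a' b).
Proof. intro H. apply (resid1 A). apply (le_trans _ _ _ _ H).
  apply (resid1 A). apply le_refl. Qed.

Lemma mmono_r (A : DInFL) (a b b' : A) : le b b' -> le (mul a b) (mul a b').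
Proof. intro H. apply (resid2 A). apply (le_trans _ _ _ _ H).
  apply (resid2 A). apply le_refl. Qed.

Lemma tm (A : DInFL) (c : A) : tilde (minus c) = c.
Proof.
  assert (E : forall b, le b c <-> le b (tilde (minus c))).
  { intro b. pose proof (resid2 A (one A) b c) as R. unfold le.
    rewrite mul_1l, mul_1r in R. exact R. }
  apply le_antisym. apply E. apply le_refl. apply E. apply le_refl. Qed.

Lemma mt (A : DInFL) (c : A) : minus (tilde c) = c.
Proof.
  assert (E : forall b, le b c <-> le b (minus (tilde c))).
  { intro b. pose proof (resid1 A b (one A) c) as R. unfold le.
    rewrite mul_1l, mul_1r in R. exact R. }
  apply le_antisym. apply E. apply le_refl. apply E. apply le_refl. Qed.

Lemma minus_anti (A : DInFL) (b b' : A) : le b b' -> le (minus b') (minus b).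
Proof.
  assert (R1 : forall a b : A, le (mul a b) (minus (one A)) <-> le a (minus b)).
  { intros a c. pose proof (resid1 A a c (minus (one A))) as R. unfold le.
    rewrite tm, mul_1r in R. exact R. }
  intro H. apply R1. eapply le_trans. apply mmono_r. exact H.
  apply R1. apply le_refl. Qed.

Lemma tilde_anti (A : DInFL) (b b' : A) : le b b' -> le (tilde b') (tilde b).
Proof.
  assert (R2 : forall a b : A, le (mul a b) (tilde (one A)) <-> le b (tilde a)).
  { intros a c. pose proof (resid2 A a c (tilde (one A))) as R. unfold le.
    rewrite mt, mul_1l in R. exact R. }
  intro H. apply R2. eapply le_trans. apply mmono_l. exact H.
  apply R2. apply le_refl. Qed.

Lemma tilde_le_iff (A : DInFL) (k a : A) : le (tilde k) a <-> le (minus a) k.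
Proof. split; intro H.
- rewrite <- (mt A k). apply minus_anti. exact H.
- rewrite <- (tm A a). apply tilde_anti. exact H. Qed.

Lemma minus_le_iff (A : DInFL) (k a : A) : le (minus k) a <-> le (tilde a) k.
Proof. split; intro H.
- rewrite <- (tm A k). apply tilde_anti. exact H.
- rewrite <- (mt A a). apply minus_anti. exact H. Qed.

Lemma sup_ub (A : cDInFL) (S : A -> Prop) x : S x -> le x (csup A S).
Proof. apply (proj1 (csup_lub A S)). Qed.
Lemma sup_least (A : cDInFL) (S : A -> Prop) u : (forall x, S x -> le x u) -> le (csup A S) u.
Proof. apply (proj2 (csup_lub A S)). Qed.
Lemma inf_lb (A : cDInFL) (S : A -> Prop) x : S x -> le (cinf A S) x.
Proof. apply (proj1 (cinf_glb A S)). Qed.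
Lemma inf_greatest (A : cDInFL) (S : A -> Prop) u : (forall x, S x -> le u x) -> le u (cinf A S).
Proof. apply (proj2 (cinf_glb A S)). Qed.

Lemma inf_char (A : cDInFL) (P : A -> Prop) c : (forall a, P a <-> le c a) -> cinf A P = c.
Proof. intro H. apply le_antisym.
- apply inf_lb. apply H. apply le_refl.
- apply inf_greatest. intros x Hx. apply H. exact Hx. Qed.

Lemma mul_sup (A : cDInFL) (X Y : A -> Prop) c :
  (forall x y, X x -> Y y -> le (mul x y) c) -> le (mul (csup A X) (csup A Y)) c.
Proof. intro H. apply (resid1 A). apply sup_least. intros x Hx.
  apply (resid1 A). apply (resid2 A). apply sup_least. intros y Hy.
  apply (resid2 A). apply H; assumption. Qed.

Lemma cji_prime (A : cDInFL) (PA : perfect A) (j : A) :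
  cji j -> forall S, le j (csup A S) -> exists s, S s /\ le j s.
Proof.
  intros Hj S HS. destruct (classic (exists s, S s /\ le j s)) as [H|H]; [exact H|exfalso].
  remember (csup A (fun x => le x j /\ x <> j)) as js eqn:Ejs.
  assert (js_le : le js j). { rewrite Ejs. apply sup_least. intros x [Hx _]. exact Hx. }
  assert (js_ne : js <> j).
  { intro E. rewrite E in Ejs. destruct (Hj _ Ejs) as [_ F]. apply F; reflexivity. }
  assert (below : forall a, ~ le j a -> le (meet j a) js).
  { intros a Ha. rewrite Ejs. apply sup_ub. split. apply meet_lb1.
    intro E. apply Ha. exact E. }
  destruct (classic (exists m, cmi m /\ le js m /\ ~ le j m)) as [[m [Hm [Hjsm Hjm]]] | Hno].
  2:{ apply js_ne. apply le_antisym. exact js_le.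
      pose proof (proj2 PA js) as E. rewrite E. apply inf_greatest.
      intros m [Hm Hm2]. apply NNPP. intro Hn. apply Hno. exists m. auto. }
  remember (cinf A (fun x => le m x /\ x <> m)) as ms eqn:Ems.
  assert (m_ms : le m ms). { rewrite Ems. apply inf_greatest. intros x [Hx _]. exact Hx. }
  assert (ms_ne : ms <> m).
  { intro E. rewrite E in Ems. destruct (Hm _ Ems) as [_ F]. apply F; reflexivity. }
  assert (above : forall b, ~ le b m -> le ms (join m b)).
  { intros b Hb. rewrite Ems. apply inf_lb. split. apply join_ub1.
    intro E. apply Hb. apply le_join. rewrite join_comm. exact E. }
  assert (Hall : forall s, S s -> le s m).
  { intros s Hs. apply NNPP. intro Hsm.
    assert (H1 : le (meet ms j) m).
    { eapply le_trans. apply meet_mono. apply (above s Hsm).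
      rewrite meet_comm, distr. eapply le_trans. 2: exact Hjsm.
      apply join_lub. apply below; exact Hjm.
      apply below. intro Hjs. apply H. exists s. auto. }
    apply ms_ne. pose proof (above j Hjm) as H2.
    unfold le in H2. rewrite <- H2. rewrite distr.
    rewrite (meet_comm A ms m). rewrite m_ms. apply le_join in H1.
    rewrite join_comm. exact H1. }
  apply Hjm. eapply le_trans. exact HS. apply sup_least. exact Hall.
Qed.

Lemma prime_cji (A : cDInFL) (j : A) :
  (forall S, le j (csup A S) -> exists s, S s /\ le j s) -> cji j.
Proof. intros H S E. destruct (H S) as [s [Hs Hjs]].
  rewrite <- E. apply le_refl.
  assert (s = j). { apply le_antisym. rewrite E. apply sup_ub. exact Hs. exact Hjs. }
  subst. exact Hs. Qed.

Lemma kappa_iff (A : cDInFL) (PA : perfect A) (j a : A) :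
  cji j -> (le a (kappa j) <-> ~ le j a).
Proof. intro Hj. split.
- intros H1 H2. destruct (cji_prime A PA j Hj (fun a => ~ le j a)) as [s [Hs1 Hs2]].
  eapply le_trans. exact H2. exact H1. exact (Hs1 Hs2).
- intro H. unfold kappa. apply sup_ub. exact H. Qed.

Section HS.
End HS.

Lemma hmono (A B : cDInFL) (h : A -> B) : complete_hom h ->
  forall a b, le a b -> le (h a) (h b).
Proof. intros Hh a b H. unfold le in *. destruct Hh as [Hm _].
  rewrite <- Hm, H. reflexivity. Qed.

Lemma galois (A B : cDInFL) (h : A -> B) : complete_hom h ->
  forall b a, le (hplus h b) a <-> le b (h a).
Proof. intros Hh b a. split; intro H.
- eapply le_trans. 2: apply (hmono A B h Hh _ _ H).
  unfold hplus. destruct Hh as (_&_&_&_&_&_&_&Hinf). rewrite Hinf.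
  apply inf_greatest. intros y [x [Hx E]]. subst. exact Hx.
- unfold hplus. apply inf_lb. exact H. Qed.

Lemma hplus_cji (A B : cDInFL) (h : A -> B) : perfect B -> complete_hom h ->
  forall b, cji b -> cji (hplus h b).
Proof. intros PB Hh b Hb. apply prime_cji. intros S HS.
  apply (galois A B h Hh) in HS.
  destruct Hh as (H1&H2&H3&H4&H5&H6&Hsup&Hinf).
  rewrite Hsup in HS.
  destruct (cji_prime B PB b Hb _ HS) as [t [[s [Hs E]] Hbt]]. subst.
  exists s. split. exact Hs. apply (galois A B h (conj H1 (conj H2 (conj H3 (conj H4 (conj H5 (conj H6 (conj Hsup Hinf)))))))). exact Hbt.
Qed.

Theorem mainTheorem15 (A B : cDInFL) (h : A -> B) :
  perfect A -> perfect B -> complete_hom h ->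
  (* (i) h_+ : J^oo(B) -> J^oo(A) is a DInFL-frame morphism B_+ -> A_+ *)
  @frame_morphism (plus B) (plus A) (hplus h) /\
  (* (ii) injective h gives surjective h_+ onto J^oo(A) *)
  ((forall a1 a2 : A, h a1 = h a2 -> a1 = a2) ->
     forall a : A, cji a -> exists b : B, cji b /\ hplus h b = a) /\
  (* (iii) surjective h gives order-embedding h_+ *)
  ((forall b : B, exists a : A, h a = b) ->
     forall x y : B, cji x -> cji y ->
       (le y x <-> le (hplus h y) (hplus h x))).
Proof.
  intros PA PB Hh.
  pose proof (galois A B h Hh) as G.
  pose proof (hmono A B h Hh) as M.
  pose proof Hh as (Hm&Hj&Hmul&H1&Ht&Hmi&Hsup&Hinf).
  assert (mono : forall x y : B, le y x -> le (hplus h y) (hplus h x)).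
  { intros x y H. apply G. eapply le_trans. exact H. apply G. apply le_refl. }
  split; [|split].
  - unfold frame_morphism; simpl. split; [|split; [|split; [|split; [|split; [|split]]]]].
    + intros x Hx. apply hplus_cji; assumption.
    + intros x y _ _ H. apply mono. exact H.
    + intros x y z _ _ _ H. apply G. rewrite Hmul. eapply le_trans. exact H.
      eapply le_trans. apply mmono_l. apply G. apply le_refl.
      apply mmono_r. apply G. apply le_refl.
    + intros z u v Hz Hu Hv H. apply G in H. rewrite Hmul in H.
      pose proof (proj1 PB (h u)) as Eu. pose proof (proj1 PB (h v)) as Ev.
      set (X := fun j => cji j /\ le j (h u)) in Eu.
      set (Y := fun j => cji j /\ le j (h v)) in Ev.
      set (T := fun t => exists x y, X x /\ Y y /\ t = mul x y).
      assert (HT : le (mul (csup B X) (csup B Y)) (csup B T)).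
      { apply mul_sup. intros x y Hx Hy. apply sup_ub. exists x, y. auto. }
      rewrite <- Eu, <- Ev in HT.
      destruct (cji_prime B PB z Hz T (le_trans _ _ _ _ H HT)) as [t [[x [y [HX [HY E]]]] Hzt]].
      destruct HX as [Hx1 Hx2]. destruct HY as [Hy1 Hy2].
      subst t. exists x, y. repeat split; try assumption; apply G; assumption.
    + intros x Hx. set (y := hplus h x). assert (Hy : cji y) by (apply hplus_cji; assumption).
      apply inf_char. intro a.
      rewrite tilde_le_iff, tilde_le_iff, kappa_iff, kappa_iff; try assumption.
      rewrite <- Hmi. unfold y. rewrite G. tauto.
    + intros x Hx. set (y := hplus h x). assert (Hy : cji y) by (apply hplus_cji; assumption).
      apply inf_char. intro a.
      rewrite minus_le_iff, minus_le_iff, kappa_iff, kappa_iff; try assumption.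
      rewrite <- Ht. unfold y. rewrite G. tauto.
    + intros x Hx. split; intros [_ H]; split.
      * apply hplus_cji; assumption.
      * apply G. rewrite H1. exact H.
      * exact Hx.
      * rewrite <- H1. apply G. exact H.
  - intros Hinj a Ha.
    assert (Hk : ~ le (h a) (h (kappa a))).
    { intro E. assert (le a (kappa a)).
      { unfold le in *. apply Hinj. rewrite Hm. exact E. }
      apply (proj1 (kappa_iff A PA a (kappa a) Ha) (le_refl _ _) H). }
    destruct (classic (exists b, (cji b /\ le b (h a)) /\ ~ le b (h (kappa a)))) as [[b [[Hb1 Hb2] Hb3]]|Hno].
    + exists b. split. exact Hb1. apply le_antisym. apply G. exact Hb2.
      apply NNPP. intro Hn. apply Hb3. apply G. apply (kappa_iff A PA a _ Ha). exact Hn.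
    + exfalso. apply Hk. rewrite (proj1 PB (h a)) at 1. apply sup_least.
      intros b Hb. apply NNPP. intro Hn. apply Hno. exists b. auto.
  - intros Hsurj x y Hx Hy. split. apply mono.
    intro H. destruct (Hsurj x) as [a0 E]. subst x.
    apply G. eapply le_trans. exact H. apply G. apply le_refl.
Qed.
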